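(* Let $W_0\in\mathcal{W}$ and let $S(W)\in\mathbb{R}^{|I||J|}$ be the global similarity vector obtained by stacking $S_1(W),\dots,S_{|I|}(W)$. Put $s_0=S(W_0)$, $s_{0i}=S_i(W_0)$, $s_{0i,j}=(S_i(W_0))_j$. Then the Jacobian $S_0=dS_{W_0}\in\mathbb{R}^{|I||J|\times|I||J|}$ of $S$ at $W_0$ is the block matrix $(A_{ik}(W_0))_{i,k\in I}$ with $|J|\times|J|$ blocks given, for $V_k\in T_0$, by $$A_{ik}(W_0)(V_k)=\begin{cases}w_{ik}\,\Pi_{s_{0i}}\Big(\frac{V_k}{W_{0k}}\Big), & k\in\mathcal{N}_i,\\ 0,& k\notin\mathcal{N}_i,\end{cases}$$ and for $k\in\mathcal{N}_i$ the entries are, for $j,l\in J$, $$\big(A_{ik}(W_0)\big)_{jl}=w_{ik}\begin{cases}(1-s_{0i,j})\dfrac{s_{0i,j}}{W_{0k,j}}, & j=l,\\[2mm] -s_{0i,j}\dfrac{s_{0i,l}}{W_{0k,l}}, & j\neq l.\end{cases}$$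
   Context: Let $G=(I,E)$ be a finite undirected graph with neighborhoods $\mathcal{N}_i=\{k\in I: ik\in E\}$, and weights $w_{ik}>0$ with $\sum_{k\in\mathcal{N}_i}w_{ik}=1$. Let $J$ be a finite label set. Operations on vectors are componentwise. $\mathcal{S}=\{p\in\mathbb{R}^{|J|}: p_j>0,\ \langle\mathbb{1},p\rangle=1\}$, $T_0=\{v:\langle\mathbb{1},v\rangle=0\}$. For $p\in\mathcal{S}$, $\Pi_p(z)=(\mathrm{Diag}(p)-pp^\top)z$ and $\exp_p(z)=\frac{p\,e^{z}}{\langle p,e^{z}\rangle}$ for $z\in\mathbb{R}^{|J|}$. $\mathcal{W}=\mathcal{S}^{|I|}$ with points $W=(W_i)_{i\in I}$; for $W_0\in\mathcal{W}$, $W_{0k}\in\mathcal{S}$ denotes its $k$-th block and $W_{0k,j}$ its $j$-th entry. Given distance vectors $D_i\in\mathbb{R}^{|J|}$ and $\rho>0$, $L_i(W_i)=\frac{W_i e^{-D_i/\rho}}{\langle W_i,e^{-D_i/\rho}\rangle}$; the geometric mean is $\mathcal{G}^w_i(W)=\exp_{W_i}\Big(\log\frac{\prod_{k\in\mathcal{N}_i}W_k^{w_{ik}}}{W_i}\Big)$; the similarity vectors are $S_i(W)=\mathcal{G}^w_i(L(W))$ where $L(W)=(L_i(W_i))_{i\in I}$. *)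

(* Defs.v *)
From HB Require Import structures.
From mathcomp Require Import all_boot all_order all_algebra.
From mathcomp Require Import all_classical all_reals all_analysis.
Set Implicit Arguments. Unset Strict Implicit. Unset Printing Implicit Defensive.
Import Order.TTheory GRing.Theory Num.Theory.
Import numFieldNormedType.Exports.
Local Open Scope ring_scope.

(* Index sets: I = 'I_m (nodes), J = 'I_n (labels).  Points W of the
   ambient space R^{|I| x |J|} are matrices 'M[R]_(m, n); row i of W is W_i. *)

Section Defs.
Variable R : realType.

Definition in_simplex n (p : 'rV[R]_n) : Prop :=
  (forall j, 0 < p 0 j) /\ \sum_j p 0 j = 1.

Definition in_T0 n (v : 'rV[R]_n) : Prop := \sum_j v 0 j = 0.

(* Pi_p(z) = (Diag(p) - p p^T) z *)
Definition Pi n (p z : 'rV[R]_n) : 'rV[R]_n :=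
  \row_j (p 0 j * z 0 j - p 0 j * \sum_l p 0 l * z 0 l).

Definition expm n (p z : 'rV[R]_n) : 'rV[R]_n :=
  \row_j (p 0 j * expR (z 0 j) / \sum_l p 0 l * expR (z 0 l)).

Definition Lik n (rho : R) (Di Wi : 'rV[R]_n) : 'rV[R]_n :=
  \row_j (Wi 0 j * expR (- Di 0 j / rho) /
          \sum_l Wi 0 l * expR (- Di 0 l / rho)).

Definition Lmat m n (rho : R) (D W : 'M[R]_(m, n)) : 'M[R]_(m, n) :=
  \matrix_(i, j) (Lik rho (row i D) (row i W)) 0 j.

Definition geomean m n (E : rel 'I_m) (w : 'M[R]_m) (W : 'M[R]_(m, n))
  (i : 'I_m) : 'rV[R]_n :=
  expm (row i W)
    (\row_j ln ((\prod_(k < m | E i k) (W k j) `^ (w i k)) / W i j)).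

Definition Smat m n (E : rel 'I_m) (w : 'M[R]_m) (rho : R)
  (D W : 'M[R]_(m, n)) : 'M[R]_(m, n) :=
  \matrix_(i, j) (geomean E w (Lmat rho D W) i) 0 j.

Definition Ablock m n (E : rel 'I_m) (w : 'M[R]_m) (rho : R)
  (D W0 : 'M[R]_(m, n)) (i k : 'I_m) (v : 'rV[R]_n) : 'rV[R]_n :=
  if E i k then
    w i k *: Pi (row i (Smat E w rho D W0)) (\row_j (v 0 j / W0 k j))
  else 0.

End Defs.

(* Main.v *)
Require Import Defs.
From HB Require Import structures.
From mathcomp Require Import all_boot all_order all_algebra.
From mathcomp Require Import all_classical all_reals all_analysis.
From mathcomp Require Import ring.
Import Order.TTheory GRing.Theory Num.Theory.
Import numFieldNormedType.Exports.
Local Open Scope ring_scope.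

Section Aux.
Context {R : realType} {V W : normedModType R}.

Lemma is_diff_near (f g dg : V -> W) x :
  (\forall y \near x, f y = g y) -> is_diff x g dg -> is_diff x f dg.
Proof.
move=> fg [dgx <-].
have key : f \o shift x = cst (f x) + 'd g x +o_ 0 id.
  apply/eqaddoP => e e0.
  have /eqaddoP := diff_locally dgx => /(_ e e0).
  have fg0 : \forall h \near 0, f (h + x) = g (h + x).
    by move: fg; rewrite (near_shift 0 x) /= subr0.
  apply: filterS2 fg0 => h /= fgh.
  by rewrite !fctE /= fgh (nbhs_singleton fg).
have dfg : 'd f x = 'd g x :> (V -> W) := diff_unique (diff_continuous dgx) key.
apply: DiffDef => //; apply/diff_locallyP; rewrite dfg; split => //.
exact: diff_continuous dgx.
Qed.

Lemma is_diff_sumf (I : Type) (r : seq I) (P : pred I) (f df : I -> V -> W) x :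
  (forall i, P i -> is_diff x (f i) (df i)) ->
  is_diff x (fun y => \sum_(i <- r | P i) f i y) (fun v => \sum_(i <- r | P i) df i v).
Proof.
move=> H; elim: r => [|a r IH].
  have -> : (fun y : V => \sum_(i <- [::] | P i) f i y) = cst 0.
    by apply/funext => y; rewrite big_nil.
  have -> : (fun y : V => \sum_(i <- [::] | P i) df i y) = 0.
    by apply/funext => y; rewrite big_nil.
  exact: is_diff_cst.
case Pa: (P a).
  have -> : (fun y : V => \sum_(i <- a :: r | P i) f i y) =
     f a + (fun y => \sum_(i <- r | P i) f i y).
    by apply/funext => y; rewrite big_cons Pa.
  have -> : (fun y : V => \sum_(i <- a :: r | P i) df i y) =
     df a + (fun y => \sum_(i <- r | P i) df i y).
    by apply/funext => y; rewrite big_cons Pa.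
  exact: is_diffD (H a Pa) IH.
have -> : (fun y : V => \sum_(i <- a :: r | P i) f i y) =
     (fun y => \sum_(i <- r | P i) f i y).
  by apply/funext => y; rewrite big_cons Pa.
have -> : (fun y : V => \sum_(i <- a :: r | P i) df i y) =
     (fun y => \sum_(i <- r | P i) df i y).
  by apply/funext => y; rewrite big_cons Pa.
exact: IH.
Qed.

Lemma is_diff_comp1 {f df : V -> R} {g : R -> R} {g' x} :
  is_diff x f df -> is_derive (f x) 1 g g' ->
  is_diff x (fun y => g (f y)) (fun v => g' * df v).
Proof.
move=> fd gd.
have dg : differentiable g (f x).
  by apply/derivable1_diffP; exact: ex_derive.
have dgv : 'd g (f x) = (fun h => h * g') :> (R -> R).
  rewrite diff1E //; apply/funext => h.
  by rewrite derive1E (@derive_val _ _ _ _ _ _ _ gd).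
have := @is_diff_comp _ _ _ _ f df g (fun h => h * g') x fd.
move=> /(_ (@DiffDef _ _ _ _ _ _ _ dg dgv)) H.
apply: is_diff_eq H _ ; apply/funext => v /=; exact: mulrC.
Qed.

Lemma is_diff_scalec {k dk : V -> R} (c : W) {x} :
  is_diff x k dk -> is_diff x (fun y => k y *: c) (fun v => dk v *: c).
Proof.
move=> [dk1 <-]; apply: DiffDef; first exact: differentiableZl.
by rewrite diffZl.
Qed.

Lemma is_diffMf {f g df dg : V -> R} {x} :
  is_diff x f df -> is_diff x g dg ->
  is_diff x (fun y => f y * g y) (fun v => f x * dg v + g x * df v).
Proof. move=> a b; exact: (is_diffM a b). Qed.

Lemma is_diffVf {f df : V -> R} {x} :
  is_diff x f df -> f x != 0 ->
  is_diff x (fun y => (f y)^-1) (fun v => - (f x) ^- 2 * df v).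
Proof.
move=> [d1 <-] fx0; apply: DiffDef; first exact: differentiableV.
by rewrite diffV.
Qed.

Lemma is_diffBf {f g df dg : V -> W} {x} :
  is_diff x f df -> is_diff x g dg ->
  is_diff x (fun y => f y - g y) (fun v => df v - dg v).
Proof. move=> a b; exact: (is_diffB a b). Qed.

Lemma is_diffDf {f g df dg : V -> W} {x} :
  is_diff x f df -> is_diff x g dg ->
  is_diff x (fun y => f y + g y) (fun v => df v + dg v).
Proof. move=> a b; exact: (is_diffD a b). Qed.

Lemma is_diff_cstf (a : W) x : is_diff x (fun _ : V => a) (fun _ => 0).
Proof. exact: is_diff_cst. Qed.

End Aux.

Lemma is_diff_coord {R : realType} {m n} (M : 'M[R]_(m, n)) i j :
  is_diff M (fun N : 'M[R]_(m, n) => N i j) (fun N => N i j).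
Proof.
have @f : {linear 'M[R]_(m, n) -> R}.
  by exists (fun N : 'M[R]_(_, _) => N i j); do 2![eexists]; do ?[constructor];
     rewrite ?mxE// => ? *; rewrite ?mxE//; move=> ?; rewrite !mxE.
rewrite (_ : (fun _ => _) = f) //.
apply: DiffDef; first exact/linear_differentiable/coord_continuous.
by rewrite diff_lin //; exact: coord_continuous.
Qed.

Lemma alg_id (R : realType) m n (Q : 'I_n -> R) (Z : R) (wk : 'I_m -> R)
  (P : pred 'I_m) (x : 'I_m -> 'I_n -> R) j :
 \sum_(k < m | P k) wk k * (Q j / Z * x k j - Q j / Z * \sum_(l < n) Q l / Z * x k l)
 = Q j * (\sum_(k < m | P k) wk k * x k j) / Z
   - Q j * (\sum_(l < n) Q l * (\sum_(k < m | P k) wk k * x k l)) / Z ^+ 2.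
Proof.
under eq_bigr do rewrite mulrBr.
rewrite sumrB; congr (_ - _).
  rewrite mulr_sumr mulr_suml; apply: eq_bigr => k _; ring.
under [in RHS]eq_bigr do rewrite mulr_sumr.
rewrite exchange_big /= mulr_sumr mulr_suml; apply: eq_bigr => k _.
rewrite !mulr_sumr mulr_suml; apply: eq_bigr => l _; rewrite expr2 invfM; ring.
Qed.

Section Main.
Variables (R : realType) (m n : nat) (E : rel 'I_m) (w : 'M[R]_m)
  (D : 'M[R]_(m, n)) (rho : R).

Definition Tf (W : 'M[R]_(m, n)) i j :=
  \sum_(k < m | E i k) w i k * (ln (W k j) - D k j / rho).
Definition Qf W i j := expR (Tf W i j).
Definition Zf W i := \sum_(l < n) Qf W i l.
Definition Ff W : 'M[R]_(m, n) := \matrix_(i, j) (Qf W i j / Zf W i).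

Definition Zp (W : 'M[R]_(m, n)) k := \sum_(l < n) W k l * expR (- D k l / rho).

Lemma Lmat_E W k j :
  Lmat rho D W k j = W k j * expR (- D k j / rho) / Zp W k.
Proof.
rewrite !mxE /Zp; congr (_ * _ / _); apply: eq_bigr => l _; by rewrite !mxE.
Qed.

Section Pos.
Variable W : 'M[R]_(m, n).
Hypothesis Wpos : forall k j, 0 < W k j.

Lemma Zp_pos k (j0 : 'I_n) : 0 < Zp W k.
Proof.
rewrite /Zp (bigD1 j0) //=.
rewrite ltr_wpDr ?mulr_gt0 ?expR_gt0 // sumr_ge0 // => l _.
by rewrite mulr_ge0 // ltW ?expR_gt0.
Qed.

Lemma L_pos k j : 0 < Lmat rho D W k j.
Proof. by rewrite Lmat_E divr_gt0 ?mulr_gt0 ?expR_gt0 ?(Zp_pos k j). Qed.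

Lemma ln_L k j :
  ln (Lmat rho D W k j) = ln (W k j) - D k j / rho - ln (Zp W k).
Proof.
have hZ := Zp_pos k j.
rewrite Lmat_E ln_div ?posrE ?mulr_gt0 ?expR_gt0 //.
by rewrite lnM ?posrE ?expR_gt0 // expRK mulNr.
Qed.

Lemma P_E i j :
  \prod_(k < m | E i k) (Lmat rho D W k j) `^ (w i k) =
  Qf W i j * expR (- \sum_(k < m | E i k) w i k * ln (Zp W k)).
Proof.
rewrite /Qf -expRD -sumrN /Tf -big_split /= expR_sum.
apply: eq_bigr => k _.
rewrite /powR gt_eqF ?L_pos // ln_L; congr expR.
by rewrite mulrBr.
Qed.

Lemma keyL i l :
  Lmat rho D W i l * expR (ln ((\prod_(k < m | E i k) (Lmat rho D W k l) `^ (w i k))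
     / Lmat rho D W i l)) =
  Qf W i l * expR (- \sum_(k < m | E i k) w i k * ln (Zp W k)).
Proof.
have hL := L_pos i l.
rewrite lnK; last first.
  by rewrite posrE divr_gt0 // prodr_gt0 // => k _; rewrite powR_gt0 ?L_pos.
by rewrite mulrC divfK ?gt_eqF // P_E.
Qed.

Lemma Smat_eq : Smat E w rho D W = Ff W.
Proof.
apply/matrixP => i j.
have rowij (A : 'M[R]_(m, n)) k l : row k A 0 l = A k l by rewrite mxE.
have rowf (f : 'I_n -> R) l : (\row_j0 f j0) 0 l = f l by rewrite mxE.
rewrite [LHS]mxE [RHS]mxE /geomean /expm [LHS]mxE.
rewrite rowij rowf keyL.
rewrite [X in _ / X = _](eq_bigr (fun l => Qf W i l * expR (- \sum_(k < m | E i k) w i k * ln (Zp W k)))); last by move=> l _; rewrite rowij rowf keyL.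
rewrite -mulr_suml /Zf. set c := expR _. have c0 : c != 0 by rewrite gt_eqF ?expR_gt0. by rewrite invfM mulrACA divff // mulr1.

Qed.

End Pos.

Variable W0 : 'M[R]_(m, n).
Hypothesis W0pos : forall k j, 0 < W0 k j.

Definition dT (V : 'M[R]_(m, n)) i j :=
  \sum_(k < m | E i k) w i k * (V k j / W0 k j).
Definition dQ V i j := Qf W0 i j * dT V i j.
Definition dZ V i := \sum_(l < n) dQ V i l.
Definition dF V : 'M[R]_(m, n) :=
  \matrix_(i, j) (dQ V i j / Zf W0 i - Qf W0 i j * dZ V i / Zf W0 i ^+ 2).

Lemma diffT i j : is_diff W0 (fun W => Tf W i j) (fun V => dT V i j).
Proof.
apply: is_diff_sumf => k _.
have h1 := is_diff_comp1 (is_diff_coord W0 k j) (is_derive1_ln (W0pos k j)).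
have h2 := is_diffBf h1 (is_diff_cstf (D k j / rho) W0).
have h3 := is_diffMf (is_diff_cstf (w i k) W0) h2.
apply: is_diff_eq h3 _; apply/funext => V /=.
by rewrite subr0 mulr0 addr0 [_^-1 * _]mulrC.
Qed.

Lemma diffQ i j : is_diff W0 (fun W => Qf W i j) (fun V => dQ V i j).
Proof.
have h := is_diff_comp1 (diffT i j) (is_derive_expR (Tf W0 i j)).
exact: h.
Qed.

Lemma diffZf i : is_diff W0 (fun W => Zf W i) (fun V => dZ V i).
Proof. by apply: is_diff_sumf => l _; exact: diffQ. Qed.

Lemma Zpos W i (j0 : 'I_n) : 0 < Zf W i.
Proof.
rewrite /Zf (bigD1 j0) //=.
by rewrite ltr_wpDr ?expR_gt0 // sumr_ge0 // => l _; rewrite ltW ?expR_gt0.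
Qed.


Lemma diffF : is_diff W0 Ff dF.
Proof.
have -> : Ff = fun W => \sum_(i < m) \sum_(j < n) (Qf W i j * (Zf W i)^-1) *: delta_mx i j.
  apply/funext => W; rewrite {1}[Ff W]matrix_sum_delta.
  by apply: eq_bigr => i _; apply: eq_bigr => j _; rewrite mxE.
have -> : dF = fun V => \sum_(i < m) \sum_(j < n)
   (Qf W0 i j * (- (Zf W0 i) ^- 2 * dZ V i) + (Zf W0 i)^-1 * dQ V i j) *: delta_mx i j.
  apply/funext => V; rewrite {1}[dF V]matrix_sum_delta.
  apply: eq_bigr => i _; apply: eq_bigr => j _; rewrite mxE; congr (_ *: _).
  ring.
apply: is_diff_sumf => i _; apply: is_diff_sumf => j _.
apply: is_diff_scalec; apply: is_diffMf; first exact: diffQ.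
apply: is_diffVf; first exact: diffZf.
by rewrite gt_eqF // (Zpos _ _ j).
Qed.

End Main.

Theorem proposition4p4 (R : realType) (m n : nat)
  (E : rel 'I_m) (w : 'M[R]_m) (D : 'M[R]_(m, n)) (rho : R)
  (W0 : 'M[R]_(m, n)) :
  (forall i k, E i k = E k i) ->
  (forall i k, E i k -> 0 < w i k) ->
  (forall i, \sum_(k < m | E i k) w i k = 1) ->
  0 < rho ->
  (forall i, in_simplex (row i W0)) ->
  let S := Smat E w rho D in
  let s0 := S W0 in
  [/\ differentiable S W0,
      (forall V : 'M[R]_(m, n), (forall k, in_T0 (row k V)) ->
         forall i, row i ('d S W0 V) = \sum_(k < m) Ablock E w rho D W0 i k (row k V))
    & (forall i k, E i k -> forall j l : 'I_n,
         (Ablock E w rho D W0 i k (delta_mx 0 l)) 0 j =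
         w i k * (if j == l then (1 - s0 i j) * (s0 i j / W0 k j)
                  else - s0 i j * (s0 i l / W0 k l)))].
Proof.
move=> hsym hw hsum hrho hsimp S s0.
have W0pos : forall k j, 0 < W0 k j.
  by move=> k j; have [h _] := hsimp k; have := h j; rewrite mxE.
have near_pos : \forall W \near W0, forall p : 'I_m * 'I_n, 0 < (W : 'M[R]_(m, n)) p.1 p.2.
  have := (@filter_forall _ _ (fun (p : 'I_m * 'I_n) (W : 'M[R]_(m, n)) => 0 < W p.1 p.2) (nbhs W0) _); apply => p.
  have hc : ((fun W : 'M[R]_(m, n) => W p.1 p.2) @ W0 --> W0 p.1 p.2)%classic.
    have := differentiable_continuous (@ex_diff _ _ _ _ _ _ _ (is_diff_coord W0 p.1 p.2)); exact.
  by apply: filterS (cvgr_gt _ hc _ (W0pos p.1 p.2)) => W.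
have hS : is_diff W0 S (dF _ _ _ E w D rho W0).
  apply: (@is_diff_near _ _ _ S (Ff _ _ _ E w D rho) _ W0 _ (diffF _ _ _ E w D rho W0 W0pos)).
  apply: filterS near_pos => W HW; apply: Smat_eq => k j; exact: (HW (k, j)).
have s0E : s0 = Ff _ _ _ E w D rho W0 by apply: Smat_eq.
split.
- exact: (@ex_diff _ _ _ _ _ _ _ hS).
- move=> V _ i; rewrite (@diff_val _ _ _ _ _ _ _ hS).
  apply/rowP => j; rewrite !mxE summxE.
  rewrite /Ablock -/S -/s0 s0E.
  have hif (b : bool) (X : 'rV[R]_n) : (if b then X else 0) 0 j = if b then X 0 j else 0.
    by case: b; rewrite ?mxE.
  under eq_bigr do rewrite hif.
  rewrite -big_mkcond /=.
  under eq_bigr do rewrite !mxE.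
  have H := (@alg_id R m n (Qf _ _ _ E w D rho W0 i) (Zf _ _ _ E w D rho W0 i) (w i) (E i)
    (fun k l => V k l / W0 k l) j).
  under eq_bigr => k _ do under eq_bigr => l _ do rewrite !mxE.
  by rewrite H /dQ /dZ /dT.

- move=> i k Eik j l; rewrite /Ablock Eik -/S -/s0.
  clear s0E; move: s0 => s.
  rewrite !mxE (bigD1 l) //= !mxE !eqxx /= big1 ?addr0; last first.
    by move=> l' /negbTE nl; rewrite !mxE nl /= mul0r mulr0.
  case: (eqVneq j l) => [->|ne]; first by rewrite ?eqxx /=; ring.
  have -> : (false%:R : R) = 0 by []. ring.
Qed.
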